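(* Let $E\subseteq\mathbb{C}$ be a finite Galois extension of $\mathbb{Q}$ and let $\mathfrak{n}^{\mathbb{Q}}$ be a finite-dimensional rational Lie algebra with a decomposition into $\mathbb{Q}$-subspaces $\mathfrak{n}^{\mathbb{Q}}=\bigoplus_{\lambda\in E\setminus\{0\}}V_\lambda$ (finitely many nonzero) such that $[V_\lambda,V_\mu]\subseteq V_{\lambda\mu}$ for all $\lambda,\mu$. Let $\rho:\mathrm{Gal}(E,\mathbb{Q})\to\mathrm{Aut}(\mathfrak{n}^{\mathbb{Q}})$ be a representation with $\rho_\sigma(V_\lambda)=V_{\sigma(\lambda)}$ for all $\sigma$ and $\lambda$. Let $f:\mathfrak{n}^E\to\mathfrak{n}^E$ be the $E$-linear map with $f(X)=\lambda X$ for all $X\in V_\lambda$. Then $f$ is a Lie algebra automorphism and there is a rational form $\mathfrak{m}^{\mathbb{Q}}\subseteq\mathfrak{n}^E$ with $f(\mathfrak{m}^{\mathbb{Q}})=\mathfrak{m}^{\mathbb{Q}}$. If every $\lambda$ with $V_\lambda\neq 0$ is an algebraic unit of absolute value different from $1$, then $\mathfrak{m}^{\mathbb{Q}}$ is Anosov.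
   Context: $\mathfrak{n}^E=E\otimes_{\mathbb{Q}}\mathfrak{n}^{\mathbb{Q}}$. A rational form of $\mathfrak{n}^E$ is a rational Lie subalgebra $\mathfrak{m}^{\mathbb{Q}}\subseteq\mathfrak{n}^E$ such that a $\mathbb{Q}$-basis of $\mathfrak{m}^{\mathbb{Q}}$ is an $E$-basis of $\mathfrak{n}^E$. An automorphism of a Lie algebra over a field $F\subseteq\mathbb{C}$ is Anosov if it is hyperbolic (no eigenvalue of absolute value $1$) and integer-like (characteristic polynomial with integer coefficients and determinant of absolute value $1$). A rational Lie algebra is Anosov if it admits an Anosov automorphism. *)

(* Defs.v *)
From HB Require Import structures.
From mathcomp Require Import all_boot all_order all_algebra all_fingroup all_field.
Set Implicit Arguments. Unset Strict Implicit. Unset Printing Implicit Defensive.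
Import Order.TTheory GRing.Theory Num.Theory.
Local Open Scope ring_scope.

(* A d-dimensional rational Lie algebra is presented (after choosing a basis)
   as Q^d = 'rV[rat]_d with structure constants c i j = [e_i, e_j].
   The bracket, extended bilinearly to R^d for any ring R containing Q
   (in particular to n^E = E (x)_Q n^Q = E^d), is: *)
Definition lie_br (R : unitRingType) (d : nat) (c : 'I_d -> 'I_d -> 'rV[rat]_d)
  (x y : 'rV[R]_d) : 'rV[R]_d :=
  \sum_(i < d) \sum_(j < d) (x 0 i * y 0 j) *: map_mx ratr (c i j).

Definition is_lie (d : nat) (c : 'I_d -> 'I_d -> 'rV[rat]_d) : Prop :=
  (forall x : 'rV[rat]_d, lie_br c x x = 0) /\
  (forall x y z : 'rV[rat]_d,
      lie_br c x (lie_br c y z) + lie_br c y (lie_br c z x)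
      + lie_br c z (lie_br c x y) = 0).

Definition lie_aut (d : nat) (c : 'I_d -> 'I_d -> 'rV[rat]_d) (A : 'M[rat]_d) : Prop :=
  A \in unitmx /\
  forall x y : 'rV[rat]_d, lie_br c (x *m A) (y *m A) = lie_br c x y *m A.

Definition lie_autE (E : fieldType) (d : nat) (c : 'I_d -> 'I_d -> 'rV[rat]_d)
  (F : 'M[E]_d) : Prop :=
  F \in unitmx /\
  forall x y : 'rV[E]_d, lie_br c (x *m F) (y *m F) = lie_br c x y *m F.

Definition ratv (E : fieldType) (d : nat) (a : 'rV[rat]_d) : 'rV[E]_d := map_mx ratr a.

Definition in_Qspan (E : fieldType) (d : nat) (B : 'M[E]_d) (v : 'rV[E]_d) : Prop :=
  exists a : 'rV[rat]_d, v = ratv E a *m B.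

(* m^Q := Q-span of the rows of B is a rational form of n^E:
   the rows of B form an E-basis of E^d (B invertible), and
   m^Q is a rational Lie subalgebra (closed under the bracket).
   (The rows are then automatically Q-linearly independent, so they are a
   Q-basis of m^Q which is an E-basis of n^E.) *)
Definition rational_form (E : fieldType) (d : nat) (c : 'I_d -> 'I_d -> 'rV[rat]_d)
  (B : 'M[E]_d) : Prop :=
  B \in unitmx /\
  forall u v : 'rV[E]_d, in_Qspan B u -> in_Qspan B v -> in_Qspan B (lie_br c u v).

Definition stabilizes (E : fieldType) (d : nat) (B F : 'M[E]_d) : Prop :=
  (forall u, in_Qspan B u -> in_Qspan B (u *m F)) /\
  (forall v, in_Qspan B v -> exists u, in_Qspan B u /\ v = u *m F).

(* Anosov automorphism of a rational Lie algebra given by a d x d rational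
   matrix A (in some Q-basis): Lie automorphism, integer-like (characteristic
   polynomial with integer coefficients, |det| = 1) and hyperbolic (no complex
   eigenvalue of absolute value 1). *)
Definition anosov_mx (d : nat) (A : 'M[rat]_d) : Prop :=
  char_poly A \is a polyOver Num.int /\
  (\det A = 1 \/ \det A = -1) /\
  (forall z : algC, root (map_poly ratr (char_poly A)) z -> `|z| != 1).

(* The rational Lie algebra m^Q (Q-span of the rows of B, with the bracket
   inherited from n^E) is Anosov: it admits a Q-linear Lie algebra
   automorphism, written as the matrix A in the Q-basis given by the rows of
   B, which is Anosov. *)
Definition anosov_form (E : fieldType) (d : nat) (c : 'I_d -> 'I_d -> 'rV[rat]_d)
  (B : 'M[E]_d) : Prop :=
  exists A : 'M[rat]_d,
    A \in unitmx /\
    (forall a b e : 'rV[rat]_d,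
        lie_br c (ratv E a *m B) (ratv E b *m B) = ratv E e *m B ->
        lie_br c (ratv E (a *m A) *m B) (ratv E (b *m A) *m B)
          = ratv E (e *m A) *m B) /\
    anosov_mx A.

Definition alg_unit (z : algC) : bool := (z != 0) && (z \in Aint) && (z^-1 \in Aint).

(* Main.v *)
Set Warnings "-notation-overridden,-ambiguous-paths,-deprecated".
Require Import Defs.
From HB Require Import structures.
From mathcomp Require Import all_boot all_order all_algebra all_fingroup all_field.
From mathcomp Require Import ring.
Set Implicit Arguments. Unset Strict Implicit. Unset Printing Implicit Defensive.
Import Order.TTheory GRing.Theory Num.Theory.
Local Open Scope ring_scope.

Lemma lie_brE (R : comUnitRingType) d (c : 'I_d -> 'I_d -> 'rV[rat]_d)
  (x y : 'rV[R]_d) k :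
  lie_br c x y 0 k = \sum_i \sum_j x 0 i * y 0 j * ratr (c i j 0 k).
Proof.
rewrite /lie_br summxE; apply: eq_bigr => i _; rewrite summxE.
by apply: eq_bigr => j _; rewrite !mxE.
Qed.

Lemma lie_brDl (R : comUnitRingType) d (c : 'I_d -> 'I_d -> 'rV[rat]_d)
  (x1 x2 y : 'rV[R]_d) :
  lie_br c (x1 + x2) y = lie_br c x1 y + lie_br c x2 y.
Proof.
apply/rowP => k; rewrite mxE !lie_brE -big_split; apply: eq_bigr => i _.
rewrite -big_split; apply: eq_bigr => j _; rewrite !mxE /=; ring.
Qed.

Lemma lie_brDr (R : comUnitRingType) d (c : 'I_d -> 'I_d -> 'rV[rat]_d)
  (x y1 y2 : 'rV[R]_d) :
  lie_br c x (y1 + y2) = lie_br c x y1 + lie_br c x y2.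
Proof.
apply/rowP => k; rewrite mxE !lie_brE -big_split; apply: eq_bigr => i _.
rewrite -big_split; apply: eq_bigr => j _; rewrite !mxE /=; ring.
Qed.

Lemma lie_brZl (R : comUnitRingType) d (c : 'I_d -> 'I_d -> 'rV[rat]_d)
  (a : R) (x y : 'rV[R]_d) :
  lie_br c (a *: x) y = a *: lie_br c x y.
Proof.
apply/rowP => k; rewrite mxE !lie_brE mulr_sumr; apply: eq_bigr => i _.
rewrite mulr_sumr; apply: eq_bigr => j _; rewrite !mxE /=; ring.
Qed.

Lemma lie_brZr (R : comUnitRingType) d (c : 'I_d -> 'I_d -> 'rV[rat]_d)
  (a : R) (x y : 'rV[R]_d) :
  lie_br c x (a *: y) = a *: lie_br c x y.
Proof.
apply/rowP => k; rewrite mxE !lie_brE mulr_sumr; apply: eq_bigr => i _.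
rewrite mulr_sumr; apply: eq_bigr => j _; rewrite !mxE /=; ring.
Qed.

Lemma lie_br0l (R : comUnitRingType) d (c : 'I_d -> 'I_d -> 'rV[rat]_d)
  (y : 'rV[R]_d) : lie_br c 0 y = 0.
Proof. by have := lie_brZl c 0 0 y; rewrite !scale0r. Qed.

Lemma lie_br0r (R : comUnitRingType) d (c : 'I_d -> 'I_d -> 'rV[rat]_d)
  (y : 'rV[R]_d) : lie_br c y 0 = 0.
Proof. by have := lie_brZr c 0 y 0; rewrite !scale0r. Qed.

Lemma lie_br_map (aR : fieldType) (rR : comUnitRingType) (f : {rmorphism aR -> rR})
  d (c : 'I_d -> 'I_d -> 'rV[rat]_d) (x y : 'rV[aR]_d) :
  map_mx f (lie_br c x y) = lie_br c (map_mx f x) (map_mx f y).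
Proof.
apply/rowP => k; rewrite mxE !lie_brE rmorph_sum; apply: eq_bigr => i _.
rewrite rmorph_sum; apply: eq_bigr => j _; by rewrite !mxE [f (_ * ratr _)]rmorphM fmorph_rat rmorphM.
Qed.

Lemma lie_br_suml (R : comUnitRingType) d (c : 'I_d -> 'I_d -> 'rV[rat]_d)
  I (r : seq I) (P : pred I) (f : I -> 'rV[R]_d) y :
  lie_br c (\sum_(i <- r | P i) f i) y = \sum_(i <- r | P i) lie_br c (f i) y.
Proof.
exact: (big_morph (fun x => lie_br c x y) (fun a b => lie_brDl c a b y) (lie_br0l c y)).
Qed.

Lemma lie_br_sumr (R : comUnitRingType) d (c : 'I_d -> 'I_d -> 'rV[rat]_d)
  I (r : seq I) (P : pred I) (f : I -> 'rV[R]_d) y :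
  lie_br c y (\sum_(i <- r | P i) f i) = \sum_(i <- r | P i) lie_br c y (f i).
Proof.
exact: (big_morph (fun x => lie_br c y x) (fun a b => lie_brDr c y a b) (lie_br0r c y)).
Qed.


Lemma ratr_alg (E : fieldExtType rat) (q : rat) : ratr q = in_alg E q.
Proof. by rewrite (fmorph_eq_rat (in_alg E)). Qed.

Lemma map_ratr (E : fieldExtType rat) m n (x : 'M[rat]_(m, n)) :
  map_mx ratr x = map_mx (in_alg E) x.
Proof. by apply/matrixP => i j; rewrite !mxE ratr_alg. Qed.

Lemma span_ind (E : fieldExtType rat) d (V : E -> 'M[rat]_d) (s : seq E)
  (Hsum : (\sum_(l <- s) V l :=: 1%:M)%MS) (P : 'rV[E]_d -> Prop) :
  P 0 -> (forall u v, P u -> P v -> P (u + v)) ->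
  (forall a u, P u -> P (a *: u)) ->
  (forall l x, (x <= V l)%MS -> P (map_mx ratr x)) -> forall v, P v.
Proof.
move=> P0 PD PZ Pgen.
have Psum I (r : seq I) (Q : pred I) F : (forall i, Q i -> P (F i)) ->
    P (\sum_(i <- r | Q i) F i).
  by move=> H; apply: (big_ind P) => //.
have Prat (x : 'rV[rat]_d) : P (map_mx ratr x).
  have : (x <= \sum_(l <- s) V l)%MS by rewrite Hsum submx1.
  rewrite (big_nth 0) big_mkord => /sub_sumsmxP[u_ ->].
  rewrite map_ratr map_mx_sum; apply: Psum => k _; rewrite -map_ratr. apply: (Pgen (nth 0 s k)).
  exact: submxMl.
move=> v; rewrite (row_sum_delta v); apply: Psum => j _; apply: PZ.
by rewrite -(map_delta_mx (in_alg E)) -map_ratr; apply: Prat.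
Qed.

Lemma ratv_br (E : fieldExtType rat) d (c : 'I_d -> 'I_d -> 'rV[rat]_d)
  (a b : 'rV[rat]_d) :
  lie_br c (ratv E a) (ratv E b) = ratv E (lie_br c a b).
Proof. by rewrite /ratv !map_ratr lie_br_map. Qed.

Lemma F_unit (E : fieldExtType rat) d (V : E -> 'M[rat]_d) (s : seq E)
  (Hs0 : 0 \notin s) (HV0 : forall l, l \notin s -> V l = 0)
  (Hsum : (\sum_(l <- s) V l :=: 1%:M)%MS) (F : 'M[E]_d)
  (HF : forall (l : E) (x : 'rV[rat]_d),
      (x <= V l)%MS -> ratv E x *m F = l *: ratv E x) :
  F \in unitmx.
Proof.
rewrite -row_full_unit -sub1mx; apply/row_subP => i; rewrite row1.
move: (delta_mx 0 i); apply: (span_ind Hsum).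
- exact: sub0mx.
- by move=> u v Hu Hv; apply: addmx_sub.
- by move=> a u Hu; apply: scalemx_sub.
move=> l x Hx; have [ls|nls] := boolP (l \in s); last first.
  by move: Hx; rewrite HV0 // submx0 => /eqP ->; rewrite map_ratr map_mx0 sub0mx.
have l0 : l != 0 by apply: contraNneq Hs0 => <-.
have -> : map_mx ratr x = l^-1 *: (ratv E x *m F).
  by rewrite (HF l x Hx) scalerA mulVf // scale1r.
by apply: scalemx_sub; apply: submxMl.
Qed.

Lemma F_br (E : fieldExtType rat) d (c : 'I_d -> 'I_d -> 'rV[rat]_d)
  (V : E -> 'M[rat]_d) (s : seq E)
  (Hsum : (\sum_(l <- s) V l :=: 1%:M)%MS)
  (Hbr : forall (l m : E) (x y : 'rV[rat]_d),
      (x <= V l)%MS -> (y <= V m)%MS -> (lie_br c x y <= V (l * m)%R)%MS)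
  (F : 'M[E]_d)
  (HF : forall (l : E) (x : 'rV[rat]_d),
      (x <= V l)%MS -> ratv E x *m F = l *: ratv E x) :
  forall x y : 'rV[E]_d, lie_br c (x *m F) (y *m F) = lie_br c x y *m F.
Proof.
move=> x; apply: (span_ind Hsum (P := fun x => forall y : 'rV[E]_d,
    lie_br c (x *m F) (y *m F) = lie_br c x y *m F)) x.
- by move=> y; rewrite mul0mx !lie_br0l mul0mx.
- by move=> u v Hu Hv y; rewrite mulmxDl !lie_brDl Hu Hv mulmxDl.
- by move=> a u Hu y; rewrite -scalemxAl !lie_brZl Hu scalemxAl.
move=> l a Ha y; apply: (span_ind Hsum (P := fun y => 
    lie_br c (map_mx ratr a *m F) (y *m F) = lie_br c (map_mx ratr a) y *m F)) y.
- by rewrite mul0mx !lie_br0r mul0mx.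
- by move=> u v Hu Hv; rewrite mulmxDl !lie_brDr Hu Hv mulmxDl.
- by move=> b u Hu; rewrite -scalemxAl !lie_brZr Hu scalemxAl.
move=> m b Hb.
have := HF _ _ Ha; have := HF _ _ Hb; rewrite /ratv => -> ->.
rewrite lie_brZl lie_brZr.
have := ratv_br E c a b; rewrite /ratv => ->.
by rewrite (HF _ _ (Hbr _ _ _ _ Ha Hb)) scalerA mulrC.
Qed.

Lemma rat_ind (E : fieldExtType rat) d (P : 'rV[E]_d -> Prop) :
  P 0 -> (forall u v, P u -> P v -> P (u + v)) ->
  (forall a u, P u -> P (a *: u)) ->
  (forall x, P (map_mx ratr x)) -> forall v, P v.
Proof.
move=> P0 PD PZ Pr; apply: (@span_ind E d (fun _ => 1%:M) [:: 1]) => //.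
by rewrite big_seq1.
Qed.

Lemma br_ext (E : fieldExtType rat) d (c : 'I_d -> 'I_d -> 'rV[rat]_d)
  (A : 'M[rat]_d) :
  (forall x y : 'rV[rat]_d, lie_br c (x *m A) (y *m A) = lie_br c x y *m A) ->
  forall x y : 'rV[E]_d,
    lie_br c (x *m map_mx ratr A) (y *m map_mx ratr A) = lie_br c x y *m map_mx ratr A.
Proof.
move=> HA x; apply: (rat_ind (P := fun x => forall y : 'rV[E]_d,
    lie_br c (x *m map_mx ratr A) (y *m map_mx ratr A) = lie_br c x y *m map_mx ratr A)) x.
- by move=> y; rewrite mul0mx !lie_br0l mul0mx.
- by move=> u v Hu Hv y; rewrite mulmxDl !lie_brDl Hu Hv mulmxDl.
- by move=> a u Hu y; rewrite -scalemxAl !lie_brZl Hu scalemxAl.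
move=> a y; apply: (rat_ind (P := fun y => 
    lie_br c (map_mx ratr a *m map_mx ratr A) (y *m map_mx ratr A)
    = lie_br c (map_mx ratr a) y *m map_mx ratr A)) y.
- by rewrite mul0mx !lie_br0r mul0mx.
- by move=> u v Hu Hv; rewrite mulmxDl !lie_brDr Hu Hv mulmxDl.
- by move=> b u Hu; rewrite -scalemxAl !lie_brZr Hu scalemxAl.
move=> b.
have := ratv_br E c; rewrite /ratv => Hr.
by rewrite !map_ratr -!map_mxM -!map_ratr Hr HA Hr !map_ratr map_mxM.
Qed.

Definition gact (E : splittingFieldType rat) d (rho : gal_of {:E} -> 'M[rat]_d)
  (g : gal_of {:E}) m (X : 'M[E]_(m, d)) : 'M[E]_(m, d) :=
  map_mx g X *m map_mx ratr (rho g).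

Lemma map_gal_ratr (E : splittingFieldType rat) (g : gal_of {:E}) m n
  (a : 'M[rat]_(m, n)) : map_mx g (map_mx ratr a) = map_mx ratr a.
Proof. by apply/matrixP => i j; rewrite !mxE fmorph_rat. Qed.

Lemma gactM (E : splittingFieldType rat) d rho (g : gal_of {:E}) m n
  (Y : 'M[E]_(m, n)) (X : 'M[E]_(n, d)) :
  gact rho g (Y *m X) = map_mx g Y *m gact rho g X.
Proof. by rewrite /gact map_mxM mulmxA. Qed.

Lemma gact_ratv (E : splittingFieldType rat) d rho (g : gal_of {:E}) m
  (a : 'M[rat]_(m, d)) :
  gact rho g (map_mx ratr a) = map_mx ratr (a *m rho g).
Proof. by rewrite /gact map_gal_ratr !map_ratr map_mxM. Qed.

Lemma gactD (E : splittingFieldType rat) d rho (g : gal_of {:E}) m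
  (X Y : 'M[E]_(m, d)) : gact rho g (X + Y) = gact rho g X + gact rho g Y.
Proof. by rewrite /gact map_mxD mulmxDl. Qed.

Lemma gactZ (E : splittingFieldType rat) d rho (g : gal_of {:E}) m a
  (X : 'M[E]_(m, d)) : gact rho g (a *: X) = g a *: gact rho g X.
Proof. by rewrite /gact map_mxZ scalemxAl. Qed.

Lemma gact0 (E : splittingFieldType rat) d rho (g : gal_of {:E}) m :
  gact rho g (0 : 'M[E]_(m, d)) = 0.
Proof. by rewrite /gact map_mx0 mul0mx. Qed.

Lemma gact_sum (E : splittingFieldType rat) d rho (g : gal_of {:E}) m
  I (r : seq I) (P : pred I) (f : I -> 'M[E]_(m, d)) :
  gact rho g (\sum_(i <- r | P i) f i) = \sum_(i <- r | P i) gact rho g (f i).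
Proof. exact: (big_morph (@gact E d rho g m) (@gactD E d rho g m) (@gact0 E d rho g m)). Qed.

Lemma gact_comp (E : splittingFieldType rat) d (rho : gal_of {:E} -> 'M[rat]_d)
  (Hrho_hom : forall sg tau, rho (sg * tau)%g = rho sg *m rho tau)
  (g h : gal_of {:E}) m (X : 'M[E]_(m, d)) :
  gact rho g (gact rho h X) = gact rho (h * g)%g X.
Proof.
rewrite /gact map_mxM map_gal_ratr -mulmxA !map_ratr -map_mxM -Hrho_hom -map_ratr.
congr (_ *m _); apply/matrixP => i j; rewrite !mxE galM //; exact: memvf.
Qed.

Lemma rho1 (E : splittingFieldType rat) d (c : 'I_d -> 'I_d -> 'rV[rat]_d)
  (rho : gal_of {:E} -> 'M[rat]_d)
  (Hrho_aut : forall sg, lie_aut c (rho sg))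
  (Hrho_hom : forall sg tau, rho (sg * tau)%g = rho sg *m rho tau) :
  rho 1%g = 1%:M.
Proof.
have [U _] := Hrho_aut 1%g.
have H := Hrho_hom 1%g 1%g; rewrite mulg1 in H.
by rewrite -[LHS]mul1mx -(mulVmx U) -mulmxA -H.
Qed.

Lemma gact1 (E : splittingFieldType rat) d (c : 'I_d -> 'I_d -> 'rV[rat]_d)
  (rho : gal_of {:E} -> 'M[rat]_d)
  (Hrho_aut : forall sg, lie_aut c (rho sg))
  (Hrho_hom : forall sg tau, rho (sg * tau)%g = rho sg *m rho tau) m
  (X : 'M[E]_(m, d)) : gact rho 1%g X = X.
Proof.
rewrite /gact (rho1 Hrho_aut Hrho_hom) map_ratr map_mx1 mulmx1.
by apply/matrixP => i j; rewrite mxE gal_id.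
Qed.

Lemma gact_br (E : splittingFieldType rat) d (c : 'I_d -> 'I_d -> 'rV[rat]_d)
  (rho : gal_of {:E} -> 'M[rat]_d)
  (Hrho_aut : forall sg, lie_aut c (rho sg)) g (x y : 'rV[E]_d) :
  gact rho g (lie_br c x y) = lie_br c (gact rho g x) (gact rho g y).
Proof.
rewrite /gact lie_br_map br_ext //.
by have [_ H] := Hrho_aut g.
Qed.

Lemma gactF (E : splittingFieldType rat) d
  (V : E -> 'M[rat]_d) (s : seq E)
  (Hsum : (\sum_(l <- s) V l :=: 1%:M)%MS)
  (rho : gal_of {:E} -> 'M[rat]_d)
  (Hrho_V : forall sg l, (V l *m rho sg == V (sg l))%MS)
  (F : 'M[E]_d)
  (HF : forall (l : E) (x : 'rV[rat]_d),
      (x <= V l)%MS -> ratv E x *m F = l *: ratv E x) (g : gal_of {:E}) :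
  map_mx g F *m map_mx ratr (rho g) = map_mx ratr (rho g) *m F.
Proof.
have Hrow (x : 'rV[E]_d) : gact rho g (x *m F) = gact rho g x *m F.
  apply: (span_ind Hsum (P := fun x => gact rho g (x *m F) = gact rho g x *m F)) x.
  - by rewrite mul0mx !gact0 mul0mx.
  - by move=> u v Hu Hv; rewrite mulmxDl !gactD Hu Hv mulmxDl.
  - by move=> a u Hu; rewrite -scalemxAl !gactZ Hu scalemxAl.
  move=> l a Ha.
  have := HF _ _ Ha; rewrite /ratv => ->; rewrite gactZ gact_ratv.
  have Hb : (a *m rho g <= V (g l))%MS.
    by move/eqmxP: (Hrho_V g l) => e; rewrite -e; exact: submxMr.
  by have := HF _ _ Hb; rewrite /ratv => ->.
apply/row_matrixP => i; rewrite !rowE !mulmxA.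
have := Hrow (delta_mx 0 i); rewrite /gact map_mxM.
by rewrite (map_delta_mx g); apply.
Qed.

Definition fixm (E : splittingFieldType rat) d (rho : gal_of {:E} -> 'M[rat]_d)
  m (X : 'M[E]_(m, d)) := forall g, gact rho g X = X.

Lemma fix_T (E : splittingFieldType rat) d (rho : gal_of {:E} -> 'M[rat]_d)
  (Hrho_hom : forall sg tau, rho (sg * tau)%g = rho sg *m rho tau) m
  (X : 'M[E]_(m, d)) : fixm rho (\sum_h gact rho h X).
Proof.
move=> g; rewrite gact_sum.
under eq_bigr => h _ do rewrite gact_comp //.
by rewrite [RHS](reindex_inj (mulIg g)).
Qed.

Lemma dedekind (E : splittingFieldType rat) d (c : 'I_d -> 'I_d -> 'rV[rat]_d)
  (rho : gal_of {:E} -> 'M[rat]_d)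
  (Hrho_aut : forall sg, lie_aut c (rho sg))
  (Hrho_hom : forall sg tau, rho (sg * tau)%g = rho sg *m rho tau)
  (W : 'M[E]_d) : W != 0 -> exists m : 'rV[E]_d, fixm rho m /\ m *m W != 0.
Proof.
case/matrix0Pn => i [j Wij].
pose c_ (g : gal_of {:E}) := (map_mx ratr ((delta_mx 0 i : 'rV[rat]_d) *m rho g) *m W) 0 j.
have c1 : c_ 1%g != 0.
  rewrite /c_ (rho1 Hrho_aut Hrho_hom) mulmx1 map_ratr map_delta_mx -rowE.
  by rewrite mxE.
have [a _ Ha] := gal_independent_contra (P := predT) (idP (isT : predT 1%g)) c1.
exists (\sum_h gact rho h (a *: delta_mx 0 i)); split; first exact: fix_T.
apply: contraNneq Ha => H0.
have -> : \sum_(y | predT y) c_ y * y a =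
   ((\sum_h gact rho h (a *: (delta_mx 0 i : 'rV[E]_d))) *m W) 0 j; last first.
  by rewrite H0 mxE.
rewrite mulmx_suml summxE; apply: eq_bigr => h _; rewrite gactZ.
rewrite -(map_delta_mx (in_alg E)) -map_ratr gact_ratv -scalemxAl mxE mulrC.
by [].
Qed.

Lemma galois1 (E : splittingFieldType rat) : galois 1%AS {:E}.
Proof.
apply/and3P; split; first exact: sub1v.
  apply/separableP => y _; apply: pcharf0_separable.
  by move=> p; rewrite pchar_lalg (pchar_num rat).
exact: normalFieldf.
Qed.

Lemma fixed_rat (E : splittingFieldType rat) (e : E) :
  (forall g : gal_of {:E}, g e = e) -> exists q : rat, e = ratr q.
Proof.
move=> He.
have : e \in (1%AS : {subfield E}).
  rewrite -(galois_fixedField (galois1 E)).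
  by apply/fixedFieldP; [exact: memvf | move=> x _; exact: He].
case/vlineP => q ->; exists q; by rewrite ratr_alg.
Qed.

Lemma map_fixed_rat (E : splittingFieldType rat) m n (X : 'M[E]_(m, n)) :
  (forall g : gal_of {:E}, map_mx g X = X) ->
  exists A : 'M[rat]_(m, n), X = map_mx ratr A.
Proof.
move=> HX.
have H i j : exists q : rat, X i j == ratr q.
  have : forall g : gal_of {:E}, g (X i j) = X i j.
    by move=> g; have /matrixP/(_ i j) := HX g; rewrite mxE.
  by case/fixed_rat => q ->; exists q.
exists (\matrix_(i, j) xchoose (H i j)); apply/matrixP => i j.
by rewrite !mxE; apply/eqP; exact: (xchooseP (H i j)).
Qed.

Lemma fix_span (E : splittingFieldType rat) d (rho : gal_of {:E} -> 'M[rat]_d)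
  (B : 'M[E]_d) (HB : B \in unitmx) (fB : fixm rho B) m (Y : 'M[E]_(m, d))
  (fY : fixm rho Y) : exists A : 'M[rat]_(m, d), Y = map_mx ratr A *m B.
Proof.
have [A eA] : exists A : 'M[rat]_(m, d), Y *m invmx B = map_mx ratr A.
  apply: map_fixed_rat => g.
  have e : map_mx g (Y *m invmx B) *m B = Y.
    by rewrite -{2}(fB g) -gactM mulmxKV // fY.
  by rewrite -{2}e mulmxK.
by exists A; rewrite -eA mulmxKV.
Qed.

Lemma span_fix (E : splittingFieldType rat) d (rho : gal_of {:E} -> 'M[rat]_d)
  (B : 'M[E]_d) (fB : fixm rho B) m (A : 'M[rat]_(m, d)) :
  fixm rho (map_mx ratr A *m B).
Proof. by move=> g; rewrite gactM map_gal_ratr fB. Qed.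

Lemma basis_ex (E : splittingFieldType rat) d (c : 'I_d -> 'I_d -> 'rV[rat]_d)
  (rho : gal_of {:E} -> 'M[rat]_d)
  (Hrho_aut : forall sg, lie_aut c (rho sg))
  (Hrho_hom : forall sg tau, rho (sg * tau)%g = rho sg *m rho tau) :
  forall k, (k <= d)%N -> exists B : 'M[E]_(k, d), row_free B /\ fixm rho B.
Proof.
elim => [|k IH] Hk.
  exists 0; split; first by rewrite /row_free -leqn0 rank_leq_row.
  by move=> g; rewrite flatmx0.
have [B [rB fB]] := IH (ltnW Hk).
have W0 : cokermx B != 0.
  apply/eqP => W0; move: (mxrank_coker B); rewrite W0 mxrank0 (eqP rB).
  by move/eqP; rewrite eq_sym subn_eq0 leqNgt Hk.
have [m [fm Hm]] := dedekind Hrho_aut Hrho_hom W0.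
have nmB : ~~ (m <= B)%MS by rewrite submxE.
have fC : fixm rho (col_mx m B).
  by move=> g; rewrite /gact map_col_mx mul_col_mx -!/(gact _ _ _) fm fB.
exists (col_mx m B); split; last exact: fC.
rewrite /row_free eqn_leq rank_leq_row /=.
have : (B < col_mx m B)%MS.
  rewrite ltmxE -addsmxE addsmxSr /=; apply: contra nmB => H.
  move: H; rewrite -addsmxE addsmx_sub; by case/andP.
by move/rank_ltmx; rewrite (eqP rB).
Qed.

Lemma anosov_roots n (A : 'M[rat]_n) :
  (forall z : algC, root (map_poly ratr (char_poly A)) z ->
     [/\ z \in Aint, z != 0, z^-1 \in Aint & `|z| != 1]) -> anosov_mx A.
Proof.
move=> Hz; set p := map_poly (@ratr algC) (char_poly A).
have [rs Hp] := closed_field_poly_normal p.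
have mp : p \is monic by rewrite map_monic char_poly_monic.
rewrite (monicP mp) scale1r in Hp.
have Hr z : z \in rs -> [/\ z \in Aint, z != 0, z^-1 \in Aint & `|z| != 1].
  by move=> zr; apply: Hz; rewrite -/p Hp root_prod_XsubC.
have pA : p \is a polyOver Aint.
  rewrite Hp big_seq; apply: rpred_prod => z /Hr [zA _ _ _].
  by rewrite rpredB ?polyOverX ?polyOverC.
have cI i : (char_poly A)`_i \in Num.int.
  rewrite -Cint_rat; apply: Cint_rat_Aint; first exact: Crat_rat.
  by rewrite -coef_map; exact: (polyOverP pA).
have e0 : p`_0 = (-1) ^+ n * ratr (\det A).
  by rewrite coef_map char_poly_det /= (rmorphM (@ratr algC)) rmorph_sign.
have p0 : p`_0 = \prod_(z <- rs) (- z).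
  by rewrite -(horner_coef0 p) Hp horner_prod; apply: eq_bigr => z _; rewrite hornerXsubC sub0r.
have dI : \det A \in Num.int.
  have := cI 0%N; rewrite char_poly_det => H.
  have -> : \det A = (-1) ^+ n * ((-1) ^+ n * \det A) by rewrite signrMK.
  by rewrite rpredM // rpredX // rpredN rpred1.
have d0 : \det A != 0.
  apply/eqP => d0; have := Hz 0; rewrite /root -/p (horner_coef0 p) e0 d0 rmorph0 mulr0 eqxx.
  by case/(_ isT).
have dVI : (\det A)^-1 \in Num.int.
  rewrite -Cint_rat; apply: Cint_rat_Aint; first exact: Crat_rat.
  have -> : ratr ((\det A)^-1) = (-1) ^+ n * (p`_0)^-1 :> algC.
    have rV : (@ratr algC) ((\det A)^-1) = ((@ratr algC) (\det A))^-1.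
      exact: fmorphV.
    by rewrite rV e0 [in RHS]invfM invr_sign signrMK.
  rewrite rpredM ?rpredX ?rpredN ?rpred1 // p0 -prodfV big_seq; apply: rpred_prod => z /Hr [_ _ zV _].
  by rewrite invrN rpredN.
split; [|split].
- by apply/polyOverP => i; exact: cI.
- have n1 := norm_intr_ge1 dI d0.
  have n2 := norm_intr_ge1 dVI (invr_neq0 d0).
  rewrite normfV invf_ge1 ?normr_gt0 // in n2.
  have na : `|\det A| = 1 by apply/eqP; rewrite eq_le n1 n2.
  have := intrEsign dI; rewrite na mulr1.
  by case: (_ < 0) => ->; [right | left].
- move=> z /Hz [_ _ _ ->] //.
Qed.

Lemma roots_loc (E : splittingFieldType rat) (iota : {rmorphism E -> algC}) n
  (V : E -> 'M[rat]_n.+1) (s : seq E)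
  (HV0 : forall l, l \notin s -> V l = 0)
  (Hsum : (\sum_(l <- s) V l :=: 1%:M)%MS) (F : 'M[E]_n.+1)
  (HF : forall (l : E) (x : 'rV[rat]_n.+1),
      (x <= V l)%MS -> ratv E x *m F = l *: ratv E x)
  (B : 'M[E]_n.+1) (HB : B \in unitmx) (A : 'M[rat]_n.+1)
  (HA : B *m F = map_mx ratr A *m B) (z : algC) :
  root (map_poly ratr (char_poly A)) z -> exists2 l, V l != 0 & z = iota l.
Proof.
pose q := \prod_(l <- s | V l != 0) ('X - l%:P).
have hq : horner_mx F q = 0.
  apply/row_matrixP => i; rewrite row0 rowE; move: (delta_mx 0 i).
  apply: (span_ind Hsum (P := fun x => x *m horner_mx F q = 0)).
  - by rewrite mul0mx.
  - by move=> u v Hu Hv; rewrite mulmxDl Hu Hv addr0.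
  - by move=> a u Hu; rewrite -scalemxAl Hu scaler0.
  move=> l x Hx; have [Vl0|Vl] := eqVneq (V l) 0.
    by move: Hx; rewrite Vl0 submx0 => /eqP ->; rewrite map_ratr map_mx0 mul0mx.
  have ls : l \in s by apply: contraNT Vl => /HV0 ->.
  rewrite /q (big_rem l ls) /= Vl rmorphM /= rmorphB /= horner_mx_X horner_mx_C.
  rewrite -mulmxE mulmxA mulmxBr.
  by have := HF _ _ Hx; rewrite /ratv => ->; rewrite mul_mx_scalar subrr mul0mx.
have eA : map_mx ratr A = B *m F *m invmx B by rewrite HA mulmxK.
have eC : map_mx iota (B *m F *m invmx B) = map_mx ratr A.
  rewrite -eA; apply/matrixP => i j; rewrite !mxE; exact: fmorph_rat.
rewrite map_char_poly -root_mxminpoly => rz.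
have : root (map_poly iota q) z.
  apply: root_dvdp rz; apply: mxminpoly_min.
  by rewrite -eC -map_horner_mx horner_mx_uconj // hq mulmx0 mul0mx map_mx0.
rewrite rmorph_prod -big_filter /=.
rewrite (eq_bigr (fun l => 'X - (iota l)%:P)); last by move=> l _; exact: map_polyXsubC.
rewrite -(big_map iota xpredT (fun w => 'X - w%:P)) root_prod_XsubC.
by case/mapP => l; rewrite mem_filter => /andP[Vl _] ->; exists l.
Qed.

Lemma roots0 (A : 'M[rat]_0) (z : algC) :
  ~~ root (map_poly ratr (char_poly A)) z.
Proof.
by rewrite /char_poly det_mx00 rmorph1 root1.
Qed.

Lemma roots_any (E : splittingFieldType rat) (iota : {rmorphism E -> algC}) d
  (V : E -> 'M[rat]_d) (s : seq E)
  (HV0 : forall l, l \notin s -> V l = 0)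
  (Hsum : (\sum_(l <- s) V l :=: 1%:M)%MS) (F : 'M[E]_d)
  (HF : forall (l : E) (x : 'rV[rat]_d),
      (x <= V l)%MS -> ratv E x *m F = l *: ratv E x)
  (B : 'M[E]_d) (HB : B \in unitmx) (A : 'M[rat]_d)
  (HA : B *m F = map_mx ratr A *m B) (z : algC) :
  root (map_poly ratr (char_poly A)) z -> exists2 l, V l != 0 & z = iota l.
Proof.
destruct d as [|n]; first by move=> rz; have := roots0 A z; rewrite rz.
exact: (roots_loc iota HV0 Hsum HF HB HA).
Qed.

Theorem corollary2p8
  (* E : a finite Galois extension of Q, embedded in C via iota *)
  (E : splittingFieldType rat) (iota : {rmorphism E -> algC})
  (* n^Q : a d-dimensional rational Lie algebra with structure constants c *)
  (d : nat) (c : 'I_d -> 'I_d -> 'rV[rat]_d) (Hlie : is_lie c)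
  (* the decomposition n^Q = (+)_{lambda in E \ 0} V_lambda *)
  (V : E -> 'M[rat]_d) (s : seq E)
  (Hs : uniq s) (Hs0 : 0 \notin s) (HV0 : forall l, l \notin s -> V l = 0)
  (Hsum : (\sum_(l <- s) V l :=: 1%:M)%MS)
  (Hdirect : mxdirect (\sum_(l <- s) V l))
  (Hbr : forall (l m : E) (x y : 'rV[rat]_d),
      (x <= V l)%MS -> (y <= V m)%MS -> (lie_br c x y <= V (l * m)%R)%MS)
  (* the Galois representation rho *)
  (rho : gal_of {:E} -> 'M[rat]_d)
  (Hrho_aut : forall sg, lie_aut c (rho sg))
  (Hrho_hom : forall sg tau, rho (sg * tau)%g = rho sg *m rho tau)
  (Hrho_V : forall sg l, (V l *m rho sg == V (sg l))%MS)
  (* f : n^E -> n^E, E-linear, f(X) = lambda X for X in V_lambda *)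
  (F : 'M[E]_d)
  (HF : forall (l : E) (x : 'rV[rat]_d),
      (x <= V l)%MS -> ratv E x *m F = l *: ratv E x) :
  lie_autE c F /\
  exists B : 'M[E]_d,
    rational_form c B /\ stabilizes B F /\
    ((forall l : E, V l != 0 -> alg_unit (iota l) && (`|iota l| != 1)) ->
     anosov_form c B).
Proof.
have HFu := F_unit Hs0 HV0 Hsum HF.
have HFbr := F_br Hsum Hbr HF.
split; first by split.
have [B [rB fB]] := basis_ex Hrho_aut Hrho_hom (leqnn d).
have HB : B \in unitmx by rewrite -row_free_unit.
have KF := gactF Hsum Hrho_V HF.
have gFm g m (X : 'M[E]_(m, d)) : gact rho g (X *m F) = gact rho g X *m F.
  by rewrite /gact map_mxM -mulmxA KF mulmxA.
have fixF m (Y : 'M[E]_(m, d)) : fixm rho Y -> fixm rho (Y *m F).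
  by move=> fY g; rewrite gFm fY.
have spanE u : in_Qspan B u <-> fixm rho u.
  split => [[a ->]|fu]; first exact: span_fix.
  by have [a ->] := fix_span HB fB fu; exists a.
exists B; split; [|split].
- split => // u v /spanE fu /spanE fv; apply/spanE => g.
  by rewrite (gact_br Hrho_aut) fu fv.
- split.
    by move=> u /spanE fu; apply/spanE; exact: fixF.
  move=> v /spanE fv; exists (v *m invmx F); split; last by rewrite mulmxKV.
  apply/spanE => g; apply: (can_inj (mulmxK HFu)); rewrite /= -gFm mulmxKV //.
move=> Hunit.
have fBF : fixm rho (B *m F) by apply: fixF.
have [A HA] := fix_span HB fB fBF.
have eA : map_mx ratr A = B *m F *m invmx B by rewrite HA mulmxK.
have hA (x : 'rV[rat]_d) : ratv E (x *m A) *m B = ratv E x *m B *m F.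
  by rewrite /ratv !map_ratr map_mxM -!map_ratr -mulmxA HA mulmxA.
exists A; split; [|split].
- rewrite -(map_unitmx (in_alg E)) -map_ratr eA !unitmx_mul HB HFu unitmx_inv HB.
  by [].
- by move=> a b e H; rewrite !hA HFbr H.
apply: anosov_roots => z rz.
have [l Vl ->] := roots_any iota HV0 Hsum HF HB HA rz.
have /andP[ua n1] := Hunit l Vl.
by move: ua; rewrite /alg_unit => /andP[/andP[nz zA] zVA]; split.
Qed.
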